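(* For the weighted linear tensor product problem $S_{\boldsymbol\gamma}=\{S_{d,\boldsymbol\gamma}\}$ described in the context, exponential uniform weak tractability (EXP-UWT) holds if and only if $$\lim_{j\to\infty}\frac{\ln\big(\ln\frac1{\lambda_j}\big)}{\ln(\ln j)}=\infty\quad\text{and}\quad \lim_{j\to\infty}\frac{\ln\big(\ln\frac1{\gamma_j}\big)}{\ln j}=\infty.$$
   Context: Let $H_1$ be a separable infinite-dimensional Hilbert space, $G_1$ a Hilbert space and $S_1:H_1\to G_1$ a compact linear operator. Let $\{(\lambda_j,e_j)\}_{j\in\mathbb N}$ be the eigenpairs of $W_1=S_1^*S_1$, with $\{e_j\}$ an orthonormal basis of $H_1$ and $\lambda_1\ge\lambda_2\ge\cdots\ge0$; assume $\lambda_1=1$, $\lambda_2>0$, and $\lambda_j\to0$. (If $\lambda_j=0$ we set $\ln\frac1{\lambda_j}=\infty$.) Let the weights satisfy $1\ge\gamma_1\ge\gamma_2\ge\cdots>0$. For $\gamma\in(0,1]$ let $H_{1,\gamma}$ be $H_1$ with inner product $\langle f,g\rangle_{H_{1,\gamma}}=\langle f_0,g_0\rangle_{H_1}+\gamma^{-1}\langle f_1,g_1\rangle_{H_1}$, where $f_0$ is the orthogonal projection of $f$ onto $\mathrm{span}\{e_1\}$ and $f_1=f-f_0$. For $d\in\mathbb N$ let $S_{d,\boldsymbol\gamma}=S_1\otimes\cdots\otimes S_1$ act from $H_{d,\boldsymbol\gamma}=H_{1,\gamma_1}\otimes\cdots\otimes H_{1,\gamma_d}$ to $G_d=G_1^{\otimes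 d}$. In the worst case setting with algorithms using $n$ arbitrary (possibly adaptive) continuous linear functionals, the information complexity $n(\varepsilon,S_{d,\boldsymbol\gamma})$ (minimal $n$ with $n$-th minimal worst case error $\le\varepsilon$; initial error is $1$) equals $\big|\{\mathbf j\in\mathbb N^d:\prod_{k=1}^d\lambda_{k,j_k}>\varepsilon^2\}\big|$, where $\lambda_{k,1}=1$ and $\lambda_{k,j}=\gamma_k\lambda_j$ for $j\ge2$. For $s,t>0$, EXP-$(s,t)$-WT means $\lim_{d+\varepsilon^{-1}\to\infty}\frac{\ln n(\varepsilon,S_{d,\boldsymbol\gamma})}{d^t+(\ln\varepsilon^{-1})^s}=0$ (over $d\in\mathbb N$, $\varepsilon\in(0,1)$); EXP-UWT means EXP-$(s,t)$-WT holds for all $s>0$ and $t>0$. *)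

(* Defs.v *)
From HB Require Import structures.
From mathcomp Require Import all_boot all_order all_algebra.
From mathcomp Require Import reals exp.
From Stdlib Require Import ClassicalEpsilon.
Set Implicit Arguments. Unset Strict Implicit. Unset Printing Implicit Defensive.
Import Order.TTheory GRing.Theory Num.Theory.
Local Open Scope ring_scope.

(* Sequences are indexed from 1 as in the paper: lam j = lambda_j, gam k = gamma_k
   for j, k >= 1; the value at index 0 is ignored. *)

(* univariate eigenvalue of the k-th factor (k : 'I_d corresponds to paper index k+1):
   lambda_{k,1} = 1, lambda_{k,j} = gamma_k * lambda_j for j >= 2 *)
Definition lamk (R : realType) (lam gam : nat -> R) (k : nat) (j : nat) : R :=
  if j == 1%N then 1 else gam k * lam j.

Definition big_eig_set (R : realType) (lam gam : nat -> R) (d : nat) (eps : R)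
  (j : {ffun 'I_d -> nat}) : Prop :=
  (forall k : 'I_d, (1 <= j k)%N) /\
  \prod_(k < d) lamk lam gam k.+1 (j k) > eps ^+ 2.

Arguments big_eig_set {R} lam gam d eps j.

Definition card_is (T : eqType) (P : T -> Prop) (m : nat) : Prop :=
  exists s : seq T, [/\ uniq s, (forall x, x \in s <-> P x) & size s = m].

(* the cardinality of P (junk value if P is infinite) *)
Definition cardP (T : eqType) (P : T -> Prop) : nat :=
  epsilon (inhabits 0%N) (fun m => card_is P m).

Definition info_compl (R : realType) (lam gam : nat -> R) (eps : R) (d : nat) : nat :=
  cardP (big_eig_set lam gam d eps).

Definition EXP_WT (R : realType) (lam gam : nat -> R) (s t : R) : Prop :=
  forall eta : R, 0 < eta -> exists M : R, forall (d : nat) (eps : R),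
    (1 <= d)%N -> 0 < eps < 1 -> M < d%:R + eps^-1 ->
    `| ln ((info_compl lam gam eps d)%:R) /
       (powR d%:R t + powR (ln eps^-1) s) | < eta.

Definition EXP_UWT (R : realType) (lam gam : nat -> R) : Prop :=
  forall s t : R, 0 < s -> 0 < t -> EXP_WT lam gam s t.

(* lim_{j -> oo} ln(ln(1/lambda_j)) / ln(ln j) = oo,
   with the convention ln(1/0) = oo (so lambda_j = 0 gives the value oo) *)
Definition lam_cond (R : realType) (lam : nat -> R) : Prop :=
  forall M : R, exists J : nat, forall j : nat, (J <= j)%N ->
    lam j = 0 \/ (0 < lam j < 1 /\ M * ln (ln (j%:R)) <= ln (ln (lam j)^-1)).

Definition gam_cond (R : realType) (gam : nat -> R) : Prop :=
  forall M : R, exists J : nat, forall j : nat, (J <= j)%N ->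
    gam j < 1 /\ M * ln (j%:R) <= ln (ln (gam j)^-1).

(* Main.v *)
Require Import Defs.
From HB Require Import structures.
From mathcomp Require Import all_boot all_order all_algebra.
From mathcomp Require Import reals exp.
From mathcomp Require Import boolp sequences.
From mathcomp Require Import ring lra zify.
From Stdlib Require Import ClassicalEpsilon.
Import Order.TTheory GRing.Theory Num.Theory.
Local Open Scope ring_scope.
Set Implicit Arguments. Unset Strict Implicit.

Lemma card_is_uniq (T : eqType) (P : T -> Prop) m m' :
  card_is P m -> card_is P m' -> m = m'.
Proof.
case=> s [us ms <-] [s' [us' ms' <-]].
apply: perm_size; apply: uniq_perm => // x.
apply/idP/idP => h; first by apply/ms'; apply/ms.
by apply/ms; apply/ms'.
Qed.

Lemma cardP_eq (T : eqType) (P : T -> Prop) m : card_is P m -> cardP P = m.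
Proof.
move=> h; rewrite /cardP.
have := epsilon_spec (inhabits 0%N) (fun m => card_is P m) (ex_intro _ m h).
by move=> h'; apply: card_is_uniq h' h.
Qed.

Lemma card_is_sub (T : eqType) (P : T -> Prop) (s : seq T) :
  (forall x, P x -> x \in s) -> exists m, card_is P m /\ (m <= size s)%N.
Proof.
move=> hs.
exists (size (undup [seq x <- s | `[< P x >]])); split.
  exists (undup [seq x <- s | `[< P x >]]); split => //.
    exact: undup_uniq.
  move=> x; rewrite mem_undup mem_filter; split.
    by case/andP => /asboolP.
  by move=> px; rewrite (hs _ px) andbT; apply/asboolP.
apply: leq_trans (size_undup _) _; by rewrite size_filter count_size.
Qed.

Lemma card_is_lb (T : eqType) (P : T -> Prop) (s : seq T) m :
  uniq s -> (forall x, x \in s -> P x) -> card_is P m -> (size s <= m)%N.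
Proof.
move=> us hs [s' [us' ms' <-]].
apply: uniq_leq_size => // x /hs; exact: (proj2 (ms' x)).
Qed.

Lemma ffun_box d K N (P : {ffun 'I_d -> nat} -> Prop) :
  (forall j, P j -> forall k : 'I_d, (1 <= j k <= N.+1)%N /\ ((K <= k)%N -> j k = 1%N)) ->
  exists m, card_is P m /\ (m <= N.+1 ^ K)%N.
Proof.
move=> hP.
pose F (f : {ffun 'I_K -> 'I_N.+1}) : {ffun 'I_d -> nat} :=
  [ffun k : 'I_d => if @insub _ (fun x => (x < K)%N) 'I_K (val k) is Some k' then (f k').+1 else 1%N].
have hs : forall j, P j -> j \in [seq F f | f <- enum {ffun 'I_K -> 'I_N.+1}]; last first.
  have [m [cm lm]] := card_is_sub hs.
  exists m; split => //.
  by move: lm; rewrite size_map -cardE card_ffun !card_ord.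
move=> j Pj.
  pose g : {ffun 'I_K -> 'I_N.+1} := [ffun k' : 'I_K =>
     inord (if @insub _ (fun x => (x < d)%N) 'I_d (val k') is Some kk then (j kk).-1 else 0%N)].
  suff -> : j = F g by apply: map_f; rewrite mem_enum.
  apply/ffunP => k; rewrite /F /g !ffunE.
  case: insubP => [k' kK vk'|]; last first.
    by rewrite -leqNgt => /(proj2 (hP j Pj k)).
  rewrite ffunE.
  case: insubP => [kk kd vkk|]; last by rewrite vk' ltn_ord.
  have -> : kk = k by apply: val_inj; rewrite vkk.
  have /andP [h1 h2] := proj1 (hP j Pj k).
  rewrite inordK; first by rewrite prednK.
  by rewrite ltnS -ltnS prednK.
Qed.

Lemma eq_le_ (R : realType) (x y : R) : x = y -> x <= y. Proof. by move=> ->. Qed.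

Lemma mono_le (R : realType) (f : nat -> R) :
  (forall j : nat, (1 <= j)%N -> f j.+1 <= f j) ->
  forall i j : nat, (1 <= i)%N -> (i <= j)%N -> f j <= f i.
Proof.
move=> hf i j hi /subnK <-; elim: (j - i)%N => [|n ih]; first by rewrite add0n.
rewrite addSn; apply: le_trans ih; apply: hf.
by rewrite (leq_trans hi) // leq_addl.
Qed.

Lemma le1_of (R : realType) (f : nat -> R) :
  f 1%N <= 1 -> (forall j : nat, (1 <= j)%N -> f j.+1 <= f j) ->
  forall j, (1 <= j)%N -> f j <= 1.
Proof. by move=> h1 hf j hj; apply: le_trans h1; apply: mono_le. Qed.

Lemma lamk01 (R : realType) (lam gam : nat -> R)
  (lam1 : lam 1%N = 1)
  (lam_nonneg : forall j : nat, (1 <= j)%N -> 0 <= lam j)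
  (lam_noninc : forall j : nat, (1 <= j)%N -> lam j.+1 <= lam j)
  (gam1 : gam 1%N <= 1)
  (gam_pos : forall j : nat, (1 <= j)%N -> 0 < gam j)
  (gam_noninc : forall j : nat, (1 <= j)%N -> gam j.+1 <= gam j) k j :
  (1 <= k)%N -> (1 <= j)%N -> 0 <= lamk lam gam k j <= 1.
Proof.
move=> hk hj; rewrite /lamk; case: eqP => _; first by rewrite ler01 lexx.
have g0 := gam_pos _ hk; have g1 := le1_of gam1 gam_noninc hk.
have l0 := lam_nonneg _ hj; have l1 := le1_of (eq_le_ lam1) lam_noninc hj.
have g0' := ltW g0.
by rewrite mulr_ge0 //= mulr_ile1.
Qed.

Lemma prod_le_factor (R : realType) d (F : 'I_d -> R) k :
  (forall i, 0 <= F i <= 1) -> \prod_i F i <= F k.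
Proof.
move=> hF; rewrite (bigD1 k) //=.
apply: ler_piMr; first by case/andP: (hF k).
by apply: prodr_ile1 => i _; apply: hF.
Qed.

Lemma big_coord (R : realType) (lam gam : nat -> R)
  (lam1 : lam 1%N = 1)
  (lam_nonneg : forall j : nat, (1 <= j)%N -> 0 <= lam j)
  (lam_noninc : forall j : nat, (1 <= j)%N -> lam j.+1 <= lam j)
  (gam1 : gam 1%N <= 1)
  (gam_pos : forall j : nat, (1 <= j)%N -> 0 < gam j)
  (gam_noninc : forall j : nat, (1 <= j)%N -> gam j.+1 <= gam j) d eps j (k : 'I_d) :
  big_eig_set lam gam d eps j -> (2 <= j k)%N ->
  eps ^+ 2 < gam k.+1 /\ eps ^+ 2 < lam (j k).
Proof.
move=> [hj hp] h2.
have := lt_le_trans hp (prod_le_factor k (fun i => lamk01 lam1 lam_nonneg lam_noninc gam1 gam_pos gam_noninc (ltn0Sn i) (hj i))).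
rewrite /lamk; case: eqP => [e|_]; first by rewrite e in h2.
have hk : (1 <= k.+1)%N by [].
have hj1 : (1 <= j k)%N by apply: hj.
have g0 := gam_pos _ hk; have g1 := le1_of gam1 gam_noninc hk.
have l0 := lam_nonneg _ hj1; have l1 := le1_of (eq_le_ lam1) lam_noninc hj1.
move=> h; split.
  apply: lt_le_trans h _; apply: ler_piMr => //.
exact: ltW.
by apply: lt_le_trans h _; apply: ler_piMl => //; apply: ltW.
Qed.

Lemma ub_card (R : realType) (lam gam : nat -> R)
  (lam1 : lam 1%N = 1)
  (lam_nonneg : forall j : nat, (1 <= j)%N -> 0 <= lam j)
  (lam_noninc : forall j : nat, (1 <= j)%N -> lam j.+1 <= lam j)
  (gam1 : gam 1%N <= 1)
  (gam_pos : forall j : nat, (1 <= j)%N -> 0 < gam j)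
  (gam_noninc : forall j : nat, (1 <= j)%N -> gam j.+1 <= gam j) d eps N K :
  (forall j, (N.+1 < j)%N -> lam j <= eps ^+ 2) ->
  (forall k, (K < k)%N -> (k <= d)%N -> gam k <= eps ^+ 2) ->
  exists m, card_is (big_eig_set lam gam d eps) m /\ (m <= N.+1 ^ K)%N.
Proof.
move=> hN hK; apply: ffun_box => j Pj k.
have hc := big_coord lam1 lam_nonneg lam_noninc gam1 gam_pos gam_noninc Pj.
have j1 : (1 <= j k)%N by case: Pj.
split.
  rewrite j1 /=; case: (ltnP 1 (j k)) => [h2|]; last by move=> h; apply: leq_trans h _.
  have [_ hl] := hc k h2; rewrite leqNgt; apply/negP => /hN; rewrite leNgt hl //.
move=> hk; apply/eqP; rewrite eqn_leq j1 andbT leqNgt; apply/negP => h2.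
have [hg _] := hc k h2.
by have := hK k.+1 hk (ltn_ord k); rewrite leNgt hg.
Qed.

Lemma fin_card (R : realType) (lam gam : nat -> R)
  (lam1 : lam 1%N = 1)
  (lam_nonneg : forall j : nat, (1 <= j)%N -> 0 <= lam j)
  (lam_noninc : forall j : nat, (1 <= j)%N -> lam j.+1 <= lam j)
  (lam_to0 : forall e : R, 0 < e -> exists J : nat, forall j : nat, (J <= j)%N -> lam j < e)
  (gam1 : gam 1%N <= 1)
  (gam_pos : forall j : nat, (1 <= j)%N -> 0 < gam j)
  (gam_noninc : forall j : nat, (1 <= j)%N -> gam j.+1 <= gam j) d eps :
  0 < eps -> card_is (big_eig_set lam gam d eps) (info_compl lam gam eps d).
Proof.
move=> e0; have [J hJ] := lam_to0 (eps ^+ 2) (exprn_gt0 2 e0).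
have [m [cm _]] : exists m, card_is (big_eig_set lam gam d eps) m /\ (m <= J.+1 ^ d)%N.
  apply: (ub_card lam1 lam_nonneg lam_noninc gam1 gam_pos gam_noninc).
    by move=> j hj; apply: ltW; apply: hJ; apply: leq_trans (leqnSn _) (ltnW hj).
  by move=> k hk hkd; have := leq_trans hk hkd; rewrite ltnn.
by rewrite /info_compl (cardP_eq cm).
Qed.

Lemma lb1 (R : realType) (lam gam : nat -> R)
  (lam1 : lam 1%N = 1)
  (lam_nonneg : forall j : nat, (1 <= j)%N -> 0 <= lam j)
  (lam_noninc : forall j : nat, (1 <= j)%N -> lam j.+1 <= lam j)
  (lam_to0 : forall e : R, 0 < e -> exists J : nat, forall j : nat, (J <= j)%N -> lam j < e)
  (gam1 : gam 1%N <= 1)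
  (gam_pos : forall j : nat, (1 <= j)%N -> 0 < gam j)
  (gam_noninc : forall j : nat, (1 <= j)%N -> gam j.+1 <= gam j) eps j0 :
  0 < eps < 1 -> (1 <= j0)%N -> eps ^+ 2 < gam 1%N * lam j0 ->
  (j0 <= info_compl lam gam eps 1)%N.
Proof.
move=> /andP [e0 e1] hj0 he.
have cP := fin_card lam1 lam_nonneg lam_noninc lam_to0 gam1 gam_pos gam_noninc 1 e0.
have := @card_is_lb _ _ [seq [ffun _ : 'I_1 => i.+1] | i <- iota 0 j0] _ _ _ cP.
rewrite size_map size_iota; apply.
  rewrite map_inj_uniq ?iota_uniq // => a b /ffunP /(_ ord0); rewrite !ffunE.
  by case.
move=> x /mapP [i]; rewrite mem_iota add0n => /andP [_ hi] ->.
split; first by move=> k; rewrite ffunE.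
rewrite big_ord1 ffunE /lamk; case: eqP => [_|hne].
  by rewrite expr2 mulr_ilt1 // ltW.
apply: lt_le_trans he _; apply: ler_wpM2l; first exact: ltW (gam_pos _ (leqnn 1)).
by apply: mono_le.
Qed.

Lemma lb2 (R : realType) (lam gam : nat -> R)
  (lam1 : lam 1%N = 1)
  (lam_nonneg : forall j : nat, (1 <= j)%N -> 0 <= lam j)
  (lam_noninc : forall j : nat, (1 <= j)%N -> lam j.+1 <= lam j)
  (lam_to0 : forall e : R, 0 < e -> exists J : nat, forall j : nat, (J <= j)%N -> lam j < e)
  (gam1 : gam 1%N <= 1)
  (gam_pos : forall j : nat, (1 <= j)%N -> 0 < gam j)
  (gam_noninc : forall j : nat, (1 <= j)%N -> gam j.+1 <= gam j) eps d :
  0 < eps -> (1 <= d)%N -> eps ^+ 2 < (gam d * lam 2%N) ^+ d ->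
  (2 ^ d <= info_compl lam gam eps d)%N.
Proof.
move=> e0 hd he.
have cP := fin_card lam1 lam_nonneg lam_noninc lam_to0 gam1 gam_pos gam_noninc d e0.
have := @card_is_lb _ _ [seq [ffun k : 'I_d => (f k : nat).+1] | f : {ffun 'I_d -> bool} <- enum {ffun 'I_d -> bool}] _ _ _ cP.
rewrite size_map -cardE card_ffun card_bool card_ord; apply.
  rewrite map_inj_uniq ?enum_uniq // => f g /ffunP hfg; apply/ffunP => k.
  by have := hfg k; rewrite !ffunE; case: (f k); case: (g k).
move=> x /mapP [f _ ->].
split; first by move=> k; rewrite ffunE.
apply: lt_le_trans he _.
have c0 : 0 <= gam d * lam 2%N by rewrite mulr_ge0 //; [apply: ltW; apply: gam_pos | apply: lam_nonneg].
have -> : (gam d * lam 2%N) ^+ d = \prod_(k < d) (gam d * lam 2%N) by rewrite prodr_const card_ord.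
apply: ler_prod => k _; rewrite c0 /= ffunE /lamk.
case: (f k) => /=.
  apply: ler_wpM2r; first exact: lam_nonneg.
  by apply: mono_le.
have c1 : gam d * lam 2%N <= 1.
  apply: mulr_ile1 => //; first exact: ltW (gam_pos _ hd).
    exact: lam_nonneg.
  exact: le1_of gam1 gam_noninc _ hd.
  exact: le1_of (eq_le_ lam1) lam_noninc _ _.
done.
Qed.

Lemma ln_nat_ge0 (R : realType) (n : nat) : 0 <= ln (n%:R : R).
Proof.
case: n => [|n]; first by rewrite ln0.
by apply: ln_ge0; rewrite ler1n.
Qed.

Lemma ln_nat_le (R : realType) (m n : nat) : (1 <= m)%N -> (m <= n)%N ->
  ln (m%:R : R) <= ln (n%:R : R).
Proof.
move=> hm hmn; rewrite ler_ln ?posrE ?ltr0n ?ler_nat //.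
exact: leq_trans hm hmn.
Qed.

Lemma den_gt0 (R : realType) (d : nat) (eps s t : R) : (1 <= d)%N ->
  0 < powR (d%:R : R) t + powR (ln eps^-1) s.
Proof.
move=> hd; have h1 : 0 < powR (d%:R : R) t by apply: powR_gt0; rewrite ltr0n.
have h2 := powR_ge0 (ln eps^-1) s; lra.
Qed.

Lemma wt_use (R : realType) (lam gam : nat -> R) s t eta :
  EXP_WT lam gam s t -> 0 < eta -> exists M : R, forall (d : nat) (eps : R),
    (1 <= d)%N -> 0 < eps < 1 -> M < d%:R + eps^-1 ->
    ln ((info_compl lam gam eps d)%:R) <
       eta * (powR d%:R t + powR (ln eps^-1) s).
Proof.
move=> hw he; have [M hM] := hw eta he; exists M => d eps hd he1 hM1.
have := hM d eps hd he1 hM1.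
rewrite ger0_norm; last by rewrite divr_ge0 ?ln_nat_ge0 // ltW // den_gt0.
by rewrite ltr_pdivrMr ?den_gt0 // mulrC.
Qed.

Lemma wt_intro (R : realType) (lam gam : nat -> R) s t :
  (forall eta, 0 < eta -> exists M : R, forall (d : nat) (eps : R),
    (1 <= d)%N -> 0 < eps < 1 -> M < d%:R + eps^-1 ->
    ln ((info_compl lam gam eps d)%:R) <
       eta * (powR d%:R t + powR (ln eps^-1) s)) -> EXP_WT lam gam s t.
Proof.
move=> hw eta he; have [M hM] := hw eta he; exists M => d eps hd he1 hM1.
rewrite ger0_norm; last by rewrite divr_ge0 ?ln_nat_ge0 // ltW // den_gt0.
by rewrite ltr_pdivrMr ?den_gt0 //; apply: (hM d eps hd he1 hM1).
Qed.

Lemma powR_pos (R : realType) (a s : R) : 0 < a -> powR a s = expR (s * ln a).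
Proof. by move=> a0; rewrite /powR gt_eqF. Qed.

Lemma ln_le (R : realType) (x y : R) : 0 < x -> x <= y -> ln x <= ln y.
Proof. by move=> x0 xy; rewrite ler_ln ?posrE // (lt_le_trans x0 xy). Qed.

Lemma ln_lt (R : realType) (x y : R) : 0 < x -> x < y -> ln x < ln y.
Proof. by move=> x0 xy; rewrite ltr_ln ?posrE // (lt_trans x0 xy). Qed.

Lemma lnMp (R : realType) (x y : R) : 0 < x -> 0 < y -> ln (x * y) = ln x + ln y.
Proof. by move=> x0 y0; rewrite lnM ?posrE. Qed.

Lemma lnVp (R : realType) (x : R) : 0 < x -> ln x^-1 = - ln x.
Proof. by move=> x0; rewrite lnV ?posrE. Qed.

Lemma ln_lt_expR (R : realType) (x y : R) : 0 < x -> x < expR y -> ln x < y.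
Proof. by move=> x0 h; rewrite -[y]expRK; apply: ln_lt. Qed.

Lemma expR_lt_ln (R : realType) (x y : R) : 0 < x -> expR y < x -> y < ln x.
Proof. by move=> x0 h; rewrite -[y]expRK; apply: ln_lt => //; exact: expR_gt0. Qed.

Lemma expR_le_ln (R : realType) (x y : R) : 0 < x -> expR y <= x -> y <= ln x.
Proof. by move=> x0 h; rewrite -[y]expRK; apply: ln_le => //; exact: expR_gt0. Qed.

Lemma sq_half (R : realType) (y : R) : 0 < y -> y <= 1 -> (y / 2) ^+ 2 < y.
Proof.
move=> y0 y1; rewrite expr2.
have : y * y <= y by apply: ler_piMl => //; apply: ltW.
lra.
Qed.

Lemma nec_lam (R : realType) (lam gam : nat -> R)
  (lam1 : lam 1%N = 1)
  (lam_nonneg : forall j : nat, (1 <= j)%N -> 0 <= lam j)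
  (lam_noninc : forall j : nat, (1 <= j)%N -> lam j.+1 <= lam j)
  (lam_to0 : forall e : R, 0 < e -> exists J : nat, forall j : nat, (J <= j)%N -> lam j < e)
  (gam1 : gam 1%N <= 1)
  (gam_pos : forall j : nat, (1 <= j)%N -> 0 < gam j)
  (gam_noninc : forall j : nat, (1 <= j)%N -> gam j.+1 <= gam j) :
  (forall s : R, 0 < s -> EXP_WT lam gam s 1) -> lam_cond lam.
Proof.
move=> hw M.
pose M' := Num.max M 1.
have M'1 : 1 <= M' by rewrite le_max lexx orbT.
have MM' : M <= M' by rewrite le_max lexx.
pose s := (4 * M')^-1.
have s0 : 0 < s by rewrite invr_gt0; lra.
have [Mw hMw] := wt_use (hw s s0) ltr01.
pose g1 := gam 1%N.
have g10 : 0 < g1 by apply: gam_pos.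
have lg1 : ln g1 <= 0 by apply: ln_le0.
have l2 : 0 < ln (2 : R) by apply: ln_gt0; lra.
pose c := ln 2 - ln g1.
pose X0 := c + 2 + expR (2 * M' * ln 2).
have eX0 : 0 < expR (2 * M' * ln 2) by apply: expR_gt0.
have [J1 hJ1] := lam_to0 (expR (- X0)) (expR_gt0 _).
have [J2 hJ2] := lam_to0 ((`|Mw| + 1)^-1) (ltac:(rewrite invr_gt0; have := normr_ge0 Mw; lra)).
pose J3 := (Num.truncn (expR (1 : R))).+1.
exists (J1 + J2 + J3)%N => j hj.
have j1 : (1 <= j)%N by clear -hj; lia.
have lj0 := lam_nonneg _ j1.
case: (eqVneq (lam j) 0) => [|ljn0]; [by left | right].
have lj : 0 < lam j by rewrite lt_def ljn0.
have hx := hJ1 j (ltac:(clear -hj; lia)).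
have lj1 : lam j < 1.
  apply: lt_le_trans hx _; rewrite expR_le1 /X0 /c; clear -l2 lg1 eX0; lra.
split; first by rewrite lj lj1.
pose x := ln (lam j)^-1.
have xX0 : X0 < x.
  rewrite /x lnVp //; have := ln_lt lj hx; rewrite expRK; clear; lra.
pose eps := g1 * lam j / 2.
have g11 : g1 <= 1 by [].
have e0 : 0 < eps by rewrite /eps; apply: divr_gt0 => //; apply: mulr_gt0.
have elj : eps < lam j.
  rewrite /eps ltr_pdivrMr //.
  have : g1 * lam j <= lam j by apply: ler_piMl => //; apply: ltW.
  clear -lj; lra.
have e1 : eps < 1 by apply: lt_trans lj1.
have he2 : eps ^+ 2 < g1 * lam j.
  rewrite /eps; apply: sq_half; first by apply: mulr_gt0.
  by apply: mulr_ile1 => //; apply: ltW.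
have he01 : 0 < eps < 1 by rewrite e0 e1.
have hn := lb1 lam1 lam_nonneg lam_noninc lam_to0 gam1 gam_pos gam_noninc he01 j1 he2.
have hlnj : ln (j%:R : R) <= ln ((info_compl lam gam eps 1)%:R) := @ln_nat_le R _ _ j1 hn.
have nM0 := normr_ge0 Mw.
have hMe : Mw < 1%:R + eps^-1.
  have : (`|Mw| + 1) < eps^-1.
    have : (lam j)^-1 < eps^-1 by rewrite ltf_pV2 ?posrE.
    have : (`|Mw| + 1) < (lam j)^-1.
      rewrite -[X in X < _]invrK ltf_pV2 ?posrE //; first by apply: hJ2; clear -hj; lia.
      by rewrite invr_gt0; clear -nM0; lra.
    clear; lra.
  have := ler_norm Mw; clear; lra.
have := hMw 1%N eps (leqnn 1) he01 hMe.
rewrite (_ : 1%:R = 1) // powR1 mul1r.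
pose a := ln eps^-1.
have ha : a = c + x.
  rewrite /a /eps /c /x invf_div invfM.
  have h20 : (0 : R) < 2 by [].
  rewrite lnMp // ?mulr_gt0 ?invr_gt0 // lnMp ?invr_gt0 // !lnVp //; clear; lra.
have cx : c < x by rewrite /X0 in xX0; clear -eX0 xX0; lra.
have x2 : 2 <= x by rewrite /X0 in xX0; clear -eX0 xX0 l2 lg1; rewrite /c in xX0; lra.
have c0 : 0 <= c by rewrite /c; clear -l2 lg1; lra.
have a1 : 1 <= a by rewrite ha; clear -x2 c0; lra.
have aux : a <= x * x.
  have : 0 <= x * (x - 2) by apply: mulr_ge0; clear -x2; lra.
  rewrite ha; clear -cx x2; nra.
rewrite -/a powR_pos; last by clear -a1; lra.
have x0 : 0 < x by clear -x2; lra.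
have lx : ln (x * x) = 2 * ln x by rewrite lnMp //; clear; lra.
have M'0 : 0 < M' by clear -M'1; lra.
have hsa : s * ln a <= ln x / (2 * M').
  have : ln a <= 2 * ln x by rewrite -lx; apply: ln_le => //; clear -a1; lra.
  rewrite /s => h.
  have -> : ln x / (2 * M') = (4 * M')^-1 * (2 * (ln x)).
    by field; clear -M'0; lra.
  by apply: ler_wpM2l => //; rewrite invr_ge0; clear -M'0; lra.
have lnx0 : 0 <= ln x by apply: ln_ge0; clear -x2; lra.
have sla0 : 0 <= s * ln a by apply: mulr_ge0; [apply: ltW | apply: ln_ge0].
have ea1 : 1 <= expR (s * ln a) by rewrite -expR0 ler_expR.
move=> hlt.
have J3j : expR (1 : R) < j%:R.
  have h1 : (J3%:R : R) <= j%:R by rewrite ler_nat; clear -hj; lia.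
  have h2 := truncnS_gt (expR (1 : R)).
  exact: lt_le_trans h2 h1.
have lnj1 : 1 < ln (j%:R : R) by apply: expR_lt_ln => //; rewrite ltr0n.
have lnj_lt : ln (j%:R : R) < 2 * expR (s * ln a) by clear -hlnj hlt ea1; lra.
have llj : ln (ln (j%:R : R)) < ln 2 + s * ln a.
  have lj0' : 0 < ln (j%:R : R) by clear -lnj1; lra.
  have := ln_lt lj0' lnj_lt.
  have h20 : (0 : R) < 2 by [].
  by rewrite lnMp ?expR_gt0 // expRK.
have llj0 : 0 <= ln (ln (j%:R : R)) by apply: ln_ge0; clear -lnj1; lra.
have lnxM : 2 * M' * ln 2 <= ln x.
  apply: expR_le_ln => //; rewrite /X0 in xX0; clear -xX0 c0; lra.
rewrite -/x.
have h1 : M' * ln (ln (j%:R : R)) <= M' * ln 2 + ln x / 2.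
  have : M' * ln (ln (j%:R : R)) <= M' * (ln 2 + ln x / (2 * M')).
    by apply: ler_wpM2l; [apply: ltW | clear -llj hsa; lra].
  have -> : M' * (ln 2 + ln x / (2 * M')) = M' * ln 2 + ln x / 2.
    by field; clear -M'0; lra.
  done.
have h2 : M * ln (ln (j%:R : R)) <= M' * ln (ln (j%:R : R)) by apply: ler_wpM2r.
clear -h1 h2 lnxM; lra.
Qed.

Lemma arith_g (R : realType) (D E c y l : R) : 1 <= D -> c + 2 <= D -> 1 <= E -> 0 <= c ->
  l <= 1 -> y < E -> l + D * (y + c) < D * D * E.
Proof.
move=> D1 Dc E1 c0 l1 yE.
have D0 : 0 < D by lra.
have h1 : D * y < D * E by rewrite ltr_pM2l.
have h2 : (c + 2) * (D * E) <= D * (D * E).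
  by apply: ler_wpM2r => //; apply: mulr_ge0; lra.
have h3 : D * c <= D * c * E.
  rewrite -[X in X <= _]mulr1; apply: ler_wpM2l => //; apply: mulr_ge0; lra.
have h4 : 1 <= D * E by rewrite -[1]mulr1; apply: ler_pM; lra.
lra.
Qed.

Lemma ln2_le1 (R : realType) : ln (2 : R) <= 1.
Proof. by have := @le_ln1Dx R 1 (ltac:(lra)); rewrite (_ : 1 + 1 = 2) //. Qed.

Lemma nec_gam (R : realType) (lam gam : nat -> R)
  (lam1 : lam 1%N = 1)
  (lam2 : 0 < lam 2%N)
  (lam_nonneg : forall j : nat, (1 <= j)%N -> 0 <= lam j)
  (lam_noninc : forall j : nat, (1 <= j)%N -> lam j.+1 <= lam j)
  (lam_to0 : forall e : R, 0 < e -> exists J : nat, forall j : nat, (J <= j)%N -> lam j < e)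
  (gam1 : gam 1%N <= 1)
  (gam_pos : forall j : nat, (1 <= j)%N -> 0 < gam j)
  (gam_noninc : forall j : nat, (1 <= j)%N -> gam j.+1 <= gam j) :
  (forall s : R, 0 < s -> EXP_WT lam gam s (2^-1)) -> gam_cond gam.
Proof.
move=> hw M.
pose M' := Num.max M 1.
have M'1 : 1 <= M' by rewrite le_max lexx orbT.
have MM' : M <= M' by rewrite le_max lexx.
pose s := (M' + 2)^-1.
have s0 : 0 < s by rewrite invr_gt0; clear -M'1; lra.
have l2 : 0 < ln (2 : R) by apply: ln_gt0; lra.
have l21 := @ln2_le1 R.
have eta0 : 0 < ln (2 : R) / 2 by apply: divr_gt0.
have [Mw hMw] := wt_use (hw s s0) eta0.
have lam21 : lam 2%N <= 1 by apply: le1_of (eq_le_ lam1) lam_noninc _ _.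
pose c := - ln (lam 2%N).
have c0 : 0 <= c by rewrite /c oppr_ge0; apply: ln_le0.
exists ((Num.truncn `|Mw|).+1 + (Num.truncn c).+3)%N => d hd.
have d1 : (1 <= d)%N by clear -hd; lia.
have hD1 : 1 <= (d%:R : R) by rewrite ler1n.
have hDc : c + 2 <= (d%:R : R).
  have h1 : c < ((Num.truncn c).+1)%:R := truncnS_gt c.
  have : ((Num.truncn c).+3%:R : R) <= d%:R by rewrite ler_nat; clear -hd; lia.
  rewrite [X in X <= _]mulrS [X in 1 + X <= _]mulrS => h2; clear -h1 h2; lra.
have hDM : Mw < d%:R.
  have h1 : `|Mw| < ((Num.truncn `|Mw|).+1)%:R := truncnS_gt `|Mw|.
  have : ((Num.truncn `|Mw|).+1%:R : R) <= d%:R by rewrite ler_nat; clear -hd; lia.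
  have := ler_norm Mw; move=> h2 h3; clear -h1 h2 h3; lra.
have g0 := gam_pos _ d1.
have g1 : gam d <= 1 by apply: le1_of gam1 gam_noninc _ d1.
pose p := gam d * lam 2%N.
have p0 : 0 < p by apply: mulr_gt0.
have p1 : p <= 1 by apply: mulr_ile1 => //; apply: ltW.
have pd0 : 0 < p ^+ d by apply: exprn_gt0.
have pd1 : p ^+ d <= 1 by apply: exprn_ile1 => //; apply: ltW.
pose eps := p ^+ d / 2.
have e0 : 0 < eps by apply: divr_gt0.
have e1 : eps < 1 by rewrite /eps; clear -pd1; lra.
have he01 : 0 < eps < 1 by rewrite e0 e1.
have he2 : eps ^+ 2 < (gam d * lam 2%N) ^+ d by apply: sq_half.
have hn := lb2 lam1 lam_nonneg lam_noninc lam_to0 gam1 gam_pos gam_noninc e0 d1 he2.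
have hln : (d%:R : R) * ln 2 <= ln ((info_compl lam gam eps d)%:R).
  have := @ln_nat_le R _ _ (expn_gt0 2 d) hn.
  by rewrite natrX lnXn // mulr_natl.
have hMe : Mw < d%:R + eps^-1.
  have : 0 < eps^-1 by rewrite invr_gt0.
  clear -hDM; lra.
have := hMw d eps d1 he01 hMe.
pose a := ln eps^-1.
rewrite -/a => hlt.
have hpd : powR (d%:R : R) (2^-1) <= d%:R.
  by apply: ler1_powR => //; rewrite invf_le1; lra.
have hA : (d%:R : R) < powR a s.
  set A := powR a s in hlt *.
  have h1 : (d%:R : R) * ln 2 < ln 2 / 2 * (d%:R + A).
    apply: le_lt_trans hln _; apply: lt_le_trans hlt _.
    by apply: ler_wpM2l; [apply: ltW | clear -hpd; lra].
  have h2 : 0 < ln 2 * (A - d%:R) by clear -h1; lra.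
  have : 0 < A - d%:R by rewrite -(pmulr_rgt0 _ l2).
  clear; lra.
have ha : a = ln 2 + d%:R * (- ln (gam d) + c).
  rewrite /a /eps invf_div lnMp ?invr_gt0 // lnVp // lnXn //.
  rewrite /p lnMp // /c mulr_natl; clear; lra.
have a0 : 0 < a.
  have : 0 <= - ln (gam d) by rewrite oppr_ge0; apply: ln_le0.
  rewrite ha => h; have : 0 <= d%:R * (- ln (gam d) + c) by apply: mulr_ge0; clear -hD1 c0 h; lra.
  clear -l2; lra.
move: hA; rewrite powR_pos // => hA.
have lnd0 : 0 <= ln (d%:R : R) by apply: ln_ge0.
have hA2 : ln (d%:R : R) < s * ln a.
  by apply: ln_lt_expR => //; clear -hD1; lra.
have hA3 : (M' + 2) * ln (d%:R : R) < ln a.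
  have -> : ln a = (M' + 2) * (s * ln a) by rewrite /s mulrA mulfV ?mul1r //; clear -M'1; lra.
  by rewrite ltr_pM2l //; clear -M'1; lra.
pose E := expR (M' * ln (d%:R : R)).
have E1 : 1 <= E.
  have h0 : 0 <= M' * ln (d%:R : R) by apply: mulr_ge0; [clear -M'1; lra | exact: lnd0].
  have := expR_ge1Dx (M' * ln (d%:R : R)); rewrite /E; clear -h0; lra.
have hDDE : (d%:R : R) * d%:R * E < a.
  have : expR ((M' + 2) * ln (d%:R : R)) < a.
    by rewrite -[X in _ < X]lnK ?posrE // ltr_expR.
  have D0 : (0 : R) < d%:R by clear -hD1; lra.
  have e2 : expR (2 * ln (d%:R : R)) = d%:R * d%:R by rewrite expRM_natl lnK ?posrE // expr2.
  by rewrite mulrDl expRD e2 -/E mulrC.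
pose y := - ln (gam d).
have yE : E <= y.
  rewrite leNgt; apply/negP => yE.
  have := arith_g hD1 hDc E1 c0 l21 yE.
  rewrite -ha; clear -hDDE; lra.
have y0 : 0 < y by clear -yE E1; lra.
split.
  rewrite ltNge; apply/negP => hg.
  have := ln_ge0 hg; rewrite /y in y0; clear -y0; lra.
rewrite lnVp // -/y.
have : M' * ln (d%:R : R) <= ln y by apply: expR_le_ln.
have : M * ln (d%:R : R) <= M' * ln (d%:R : R) by apply: ler_wpM2r.
clear; lra.
Qed.

Lemma lt_expR_of_ln (R : realType) (x y : R) : 0 < x -> ln x < y -> x < expR y.
Proof. by move=> x0 h; rewrite -[X in X < _]lnK ?posrE // ltr_expR. Qed.

Lemma ln_eps_bound (R : realType) (eps z : R) : 0 < eps -> eps ^+ 2 < z ->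
  ln z^-1 < 2 * ln eps^-1.
Proof.
move=> e0 hz.
have e20 : 0 < eps ^+ 2 by apply: exprn_gt0.
have z0 : 0 < z by apply: lt_trans hz.
have hlt : z^-1 < (eps ^+ 2)^-1 by rewrite ltf_pV2 ?posrE.
have zi0 : 0 < z^-1 by rewrite invr_gt0.
have := ln_lt zi0 hlt.
by rewrite -exprVn lnXn ?invr_gt0 // mulr_natl.
Qed.

Lemma natr_maxn_le (R : realType) (m n : nat) : ((maxn m n)%:R : R) <= m%:R + n%:R.
Proof. by rewrite -natrD ler_nat; clear; lia. Qed.

Lemma ub_main (R : realType) (lam gam : nat -> R)
  (lam1 : lam 1%N = 1)
  (lam_nonneg : forall j : nat, (1 <= j)%N -> 0 <= lam j)
  (lam_noninc : forall j : nat, (1 <= j)%N -> lam j.+1 <= lam j)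
  (gam1 : gam 1%N <= 1)
  (gam_pos : forall j : nat, (1 <= j)%N -> 0 < gam j)
  (gam_noninc : forall j : nat, (1 <= j)%N -> gam j.+1 <= gam j)
  (M0 : R) (Jg Jl : nat) : 0 < M0 ->
  (forall j : nat, (Jg <= j)%N -> gam j < 1 /\ M0 * ln (j%:R) <= ln (ln (gam j)^-1)) ->
  (forall j : nat, (Jl <= j)%N ->
    lam j = 0 \/ (0 < lam j < 1 /\ M0 * ln (ln (j%:R)) <= ln (ln (lam j)^-1))) ->
  forall d eps, 0 < eps < 1 ->
  ln ((info_compl lam gam eps d)%:R) <=
    (Jg%:R + 1 + expR (ln (2 * ln eps^-1) / M0)) *
    (ln 2 + ln (Jl%:R + 2) + expR (ln (2 * ln eps^-1) / M0)).
Proof.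
move=> M00 hJg hJl d eps /andP [e0 e1].
pose L := 2 * ln eps^-1.
have L0 : 0 < L.
  rewrite /L; apply: mulr_gt0 => //; apply: ln_gt0; rewrite invf_gt1 //; exact/andP.
pose u := expR (ln L / M0).
rewrite -/L -/u.
have u0 : 0 < u by apply: expR_gt0.
pose K := maxn Jg (Num.truncn u).+1.
pose N := maxn Jl (Num.truncn (expR u)).+1.
have e20 : 0 < eps ^+ 2 by apply: exprn_gt0.
have hNl : forall j, (N.+1 < j)%N -> lam j <= eps ^+ 2.
  move=> j hj; rewrite leNgt; apply/negP => hlt.
  have hjl : (Jl <= j)%N by rewrite /N in hj; clear -hj; lia.
  have j2 : (2 <= j)%N by clear -hj; lia.
  case: (hJl j hjl) => [h0|[/andP [lj0 lj1] hM]].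
    by rewrite h0 in hlt; move: hlt; rewrite ltNge (ltW e20).
  have lnlj : ln (ln (lam j)^-1) < ln L.
    apply: ln_lt; last exact: ln_eps_bound.
    by apply: ln_gt0; rewrite invf_gt1.
  have lnj0 : 0 < ln (j%:R : R) by apply: ln_gt0; rewrite ltr1n.
  have h1 : ln (ln (j%:R : R)) < ln L / M0.
    by rewrite ltr_pdivlMr // mulrC; apply: le_lt_trans hM lnlj.
  have h2 : ln (j%:R : R) < u by apply: lt_expR_of_ln.
  have h3 : (j%:R : R) < expR u by apply: lt_expR_of_ln => //; rewrite ltr0n; clear -j2; lia.
  have h4 : expR u < ((Num.truncn (expR u)).+1)%:R := truncnS_gt (expR u).
  have h5 : (((Num.truncn (expR u)).+1)%:R : R) <= j%:R.
    by rewrite ler_nat /N in hj *; clear -hj; lia.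
  by move: h3; rewrite ltNge (ltW (lt_le_trans h4 h5)).
have hKg : forall k, (K < k)%N -> (k <= d)%N -> gam k <= eps ^+ 2.
  move=> k hk hkd; rewrite leNgt; apply/negP => hlt.
  have hkg : (Jg <= k)%N by rewrite /K in hk; clear -hk; lia.
  have k1 : (1 <= k)%N by clear -hk; lia.
  have [g1 hM] := hJg k hkg.
  have g0 := gam_pos k k1.
  have lnlg : ln (ln (gam k)^-1) < ln L.
    apply: ln_lt; last exact: ln_eps_bound.
    by apply: ln_gt0; rewrite invf_gt1.
  have h1 : ln (k%:R : R) < ln L / M0.
    by rewrite ltr_pdivlMr // mulrC; apply: le_lt_trans hM lnlg.
  have h3 : (k%:R : R) < u by apply: lt_expR_of_ln => //; rewrite ltr0n.
  have h4 : u < ((Num.truncn u).+1)%:R := truncnS_gt u.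
  have h5 : (((Num.truncn u).+1)%:R : R) <= k%:R.
    by rewrite ler_nat /K in hk *; clear -hk; lia.
  by move: h3; rewrite ltNge (ltW (lt_le_trans h4 h5)).
have [m [cm hm]] := @ub_card R lam gam lam1 lam_nonneg lam_noninc gam1 gam_pos gam_noninc d eps N K hNl hKg.
have -> : info_compl lam gam eps d = m.
  rewrite /info_compl; exact: cardP_eq cm.
have hlnm : ln (m%:R : R) <= K%:R * ln (N.+1%:R).
  case: m hm {cm} => [|m] hm; first by rewrite ln0 // mulr_ge0 // ln_nat_ge0.
  have := @ln_nat_le R _ _ (ltn0Sn m) hm.
  by rewrite natrX lnXn ?ltr0n // mulr_natl.
apply: le_trans hlnm _.
have hK : (K%:R : R) <= Jg%:R + 1 + u.
  have h1 := natr_maxn_le R Jg (Num.truncn u).+1.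
  have h2 : ((Num.truncn u)%:R : R) <= u by rewrite truncn_le ltW.
  rewrite -/K in h1; move: h1; rewrite -natr1 => h1; clear -h1 h2; lra.
have hN : ln (N.+1%:R : R) <= ln 2 + ln (Jl%:R + 2) + u.
  have h1 := natr_maxn_le R Jl (Num.truncn (expR u)).+1.
  have h2 : ((Num.truncn (expR u))%:R : R) <= expR u by rewrite truncn_le ltW // expR_gt0.
  have eu1 : 1 <= expR u by rewrite -expR0 ler_expR ltW.
  have hJ2 : 1 <= (Jl%:R + 2 : R) by have := ler0n R Jl; lra.
  have h3 : (N.+1%:R : R) <= 2 * (Jl%:R + 2) * expR u.
    rewrite -/N in h1; move: h1; rewrite -natr1 -[N.+1]addn1 natrD => h1.
    have h4 : (Jl%:R + 2 : R) <= (Jl%:R + 2) * expR u.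
      by rewrite -[X in X <= _]mulr1 ler_wpM2l //; lra.
    have h5 : expR u <= (Jl%:R + 2) * expR u.
      by rewrite -[X in X <= _]mul1r ler_wpM2r // ltW // expR_gt0.
    clear -h1 h2 h4 h5; lra.
  have N0 : (0 : R) < N.+1%:R by rewrite ltr0n.
  have := ln_le N0 h3.
  rewrite lnMp ?mulr_gt0 ?expR_gt0 //; last by lra.
  by rewrite lnMp ?expRK //; lra.
apply: ler_pM; [exact: ler0n | exact: ln_nat_ge0 | exact: hK | exact: hN].
Qed.

Lemma asym (R : realType) (s t eta M0 c1 c2 : R) : 0 < s -> 0 < t -> 0 < eta ->
  M0 = 4 / s -> 0 <= c1 -> 0 <= c2 ->
  exists M : R, forall (d : nat) (eps : R), (1 <= d)%N -> 0 < eps < 1 -> M < d%:R + eps^-1 ->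
   forall X, X <= (c1 + expR (ln (2 * ln eps^-1) / M0)) * (c2 + expR (ln (2 * ln eps^-1) / M0)) ->
   X < eta * (powR d%:R t + powR (ln eps^-1) s).
Proof.
move=> s0 t0 eta0 hM0 c10 c20.
have M00 : 0 < M0 by rewrite hM0 divr_gt0.
pose C := (c1 + 1) * (c2 + 1).
have C0 : 0 < C by apply: mulr_gt0; clear -c10 c20; lra.
pose c3 := expR (- (s * ln 2)).
have c30 : 0 < c3 by apply: expR_gt0.
pose U0 := C / (eta * c3) + 1.
have hU0 : C / (eta * c3) < U0 by rewrite /U0; lra.
have U01 : 1 <= U0.
  have : 0 <= C / (eta * c3) by apply: divr_ge0; apply: ltW => //; apply: mulr_gt0.
  rewrite /U0; lra.
pose B := (c1 + U0) * (c2 + U0).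
have B0 : 0 < B by apply: mulr_gt0; clear -c10 c20 U01; lra.
pose L0 := expR (M0 * ln U0).
pose D0 := expR (ln (B / eta) / t).
exists (expR L0 + D0) => d eps d1 /andP [e0 e1] hM X hX.
pose a := ln eps^-1.
have a0 : 0 < a by apply: ln_gt0; rewrite invf_gt1.
pose L := 2 * a.
have L0p : 0 < L by rewrite /L; apply: mulr_gt0.
pose u := expR (ln L / M0).
have u0 : 0 < u by apply: expR_gt0.
rewrite -/a -/L -/u in hX *.
have D1 : (1 : R) <= d%:R by rewrite ler1n.
have Dp : (0 : R) < d%:R by lra.
pose P := expR (t * ln (d%:R : R)).
have hP : powR (d%:R : R) t = P by rewrite powR_pos.
have P0 : 0 <= P by apply: ltW; apply: expR_gt0.
have hQ : powR a s = c3 * u ^+ 4.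
  rewrite powR_pos // /c3 /u -expRM_natl -expRD.
  congr expR.
  have -> : a = L / 2 by rewrite /L; field.
  rewrite lnMp ?invr_gt0 // lnVp // hM0.
  field; lra.
rewrite hP hQ.
have Q0 : 0 <= c3 * u ^+ 4 by apply: mulr_ge0; [apply: ltW | apply: exprn_ge0; apply: ltW].
case: (leP U0 u) => hu.
- have u1 : 1 <= u by apply: le_trans hu.
  have h1 : (c1 + u) * (c2 + u) <= C * (u * u).
    have h11 : c1 + u <= (c1 + 1) * u.
      have hh : c1 <= c1 * u by rewrite -[X in X <= _]mulr1 ler_wpM2l.
      clear -hh; lra.
    have h12 : c2 + u <= (c2 + 1) * u.
      have hh : c2 <= c2 * u by rewrite -[X in X <= _]mulr1 ler_wpM2l.
      clear -hh; lra.
    have -> : C * (u * u) = ((c1 + 1) * u) * ((c2 + 1) * u) by rewrite /C; ring.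
    apply: ler_pM => //; clear -c10 c20 u0; lra.
  have uu : U0 <= u * u.
    apply: le_trans hu _; rewrite -[X in X <= _]mulr1 ler_wpM2l //; lra.
  have h2 : C < eta * c3 * (u * u).
    have : C / (eta * c3) < u * u by apply: lt_le_trans hU0 uu.
    by rewrite ltr_pdivrMr ?mulr_gt0 // mulrC.
  have h3 : C * (u * u) < eta * (c3 * u ^+ 4).
    have -> : eta * (c3 * u ^+ 4) = (eta * c3 * (u * u)) * (u * u) by ring.
    by rewrite ltr_pM2r // mulr_gt0.
  have h4 : eta * (c3 * u ^+ 4) <= eta * (P + c3 * u ^+ 4).
    by rewrite ler_pM2l //; clear -P0; lra.
  clear -hX h1 h3 h4; lra.
- have h1 : (c1 + u) * (c2 + u) <= B.
    by apply: ler_pM; clear -c10 c20 u0 hu; lra.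
  have hlnL : ln L / M0 < ln U0 by apply: expR_lt_ln => //; lra.
  have hL : L < L0.
    apply: lt_expR_of_ln => //.
    by move: hlnL; rewrite ltr_pdivrMr // mulrC.
  have ha : a < L0 by rewrite /L in hL; clear -hL a0; lra.
  have hei : eps^-1 = expR a by rewrite /a lnK // posrE invr_gt0.
  have hei2 : eps^-1 < expR L0 by rewrite hei ltr_expR.
  have hd : D0 < d%:R by clear -hM hei2; lra.
  have hlnd : ln (B / eta) / t < ln (d%:R : R) by apply: expR_lt_ln.
  have hPB : B / eta < P.
    rewrite /P; apply: lt_expR_of_ln; first by apply: divr_gt0.
    by rewrite (mulrC t) -ltr_pdivrMr.
  have h2 : B < eta * P by move: hPB; rewrite ltr_pdivrMr // mulrC.
  have h4 : eta * P <= eta * (P + c3 * u ^+ 4) by rewrite ler_pM2l //; clear -Q0; lra.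
  clear -hX h1 h2 h4; lra.
Qed.

Theorem theorem2 (R : realType) (lam gam : nat -> R)
  (lam1 : lam 1%N = 1)
  (lam2 : 0 < lam 2%N)
  (lam_nonneg : forall j : nat, (1 <= j)%N -> 0 <= lam j)
  (lam_noninc : forall j : nat, (1 <= j)%N -> lam j.+1 <= lam j)
  (lam_to0 : forall e : R, 0 < e -> exists J : nat, forall j : nat, (J <= j)%N -> lam j < e)
  (gam1 : gam 1%N <= 1)
  (gam_pos : forall j : nat, (1 <= j)%N -> 0 < gam j)
  (gam_noninc : forall j : nat, (1 <= j)%N -> gam j.+1 <= gam j) :
  EXP_UWT lam gam <-> (lam_cond lam /\ gam_cond gam).
Proof.
split.
- move=> hU; split.
  + apply: (nec_lam lam1 lam_nonneg lam_noninc lam_to0 gam1 gam_pos gam_noninc) => s s0.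
    exact: hU s 1 s0 ltr01.
  + apply: (nec_gam lam1 lam2 lam_nonneg lam_noninc lam_to0 gam1 gam_pos gam_noninc) => s s0.
    by apply: hU => //; rewrite invr_gt0.
- case=> hl hg s t s0 t0; apply: wt_intro => eta eta0.
  pose M0 := 4 / s.
  have M00 : 0 < M0 by rewrite /M0 divr_gt0.
  have [Jg hJg] := hg M0.
  have [Jl hJl] := hl M0.
  have c10 : 0 <= (Jg%:R : R) + 1 by have := ler0n R Jg; lra.
  have c20 : 0 <= ln (2 : R) + ln (Jl%:R + 2).
    have h1 : 0 <= ln (2 : R) by apply: ln_ge0; lra.
    have h2 : 0 <= ln ((Jl%:R : R) + 2) by apply: ln_ge0; have := ler0n R Jl; lra.
    lra.
  have [M hM] := asym s0 t0 eta0 (erefl M0) c10 c20.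
  exists M => d eps d1 he hMe; apply: (hM d eps d1 he hMe).
  exact: (ub_main lam1 lam_nonneg lam_noninc gam1 gam_pos gam_noninc M00 hJg hJl d he).
Qed.
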